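(* Let $a,b$ be integers such that $q=a^3+5a^2b-8ab^2+b^3$ is a (positive) prime. Then $q\equiv\pm1\pmod 7$; moreover $q\equiv 1\pmod 7$ if and only if $\left(\frac{-7(a^2-ab+b^2)}{q}\right)=1$, and $q\equiv -1\pmod 7$ if and only if $\left(\frac{-7(a^2-ab+b^2)}{q}\right)=-1$.
   Context: $\left(\frac{\cdot}{q}\right)$ denotes the Legendre symbol modulo $q$. *)

(* Defs.v *)
From mathcomp Require Import all_boot all_order all_algebra.
Set Implicit Arguments. Unset Strict Implicit. Unset Printing Implicit Defensive.
Import Order.TTheory GRing.Theory Num.Theory.
Local Open Scope ring_scope.

Definition legendre (x : int) (p : nat) : int :=
  if (p%:Z %| x)%Z then 0
  else if [exists y : 'I_p, (p%:Z %| (y%:Z) ^+ 2 - x)%Z] then 1 else -1.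

(* Main.v *)
Require Import Defs.
From mathcomp Require Import all_boot all_order all_algebra.
From mathcomp Require Import all_field.
From mathcomp Require Import ring zify lra.
Import Order.TTheory GRing.Theory Num.Theory.
Local Open Scope ring_scope.
Definition gp {R : comRingType} (t : R) := t^+3 + 5*t^+2 - 8*t + 1.
Definition Cp {R : comRingType} (e : R) := e^+3 + e^+2 - 2*e - 1.
Definition P7 {R : comRingType} (z : R) := z^+6 + z^+5 + z^+4 + z^+3 + z^+2 + z + 1.
Definition Tp {R : comRingType} (e : R) := - 1 - 3*e - e^+2.
Definition Dp {R : comRingType} (t : R) := t^+2 - t + 1.
Definition rp {R : comRingType} (e : R) := 1 + 6*e + 2*e^+2.
Lemma idB1 (R : comRingType) (t w : R) : gp t - (t - Tp (w + w^+6)) * (t - Tp (w^+2 + w^+5)) * (t - Tp (w^+3 + w^+4)) = P7 w * (- t^+2*w^+6 + t^+2*w^+5 - t^+2*w^+4 + t^+2*w^+3 - t^+2*w^+2 - 5*t^+2*w + 2*t^+2 - t*w^+16 + t*w^+15 - t*w^+14 - 3*t*w^+13 + 2*t*w^+12 - 5*t*w^+11 - t*w^+10 - 13*t*w^+8 - 2*t*w^+7 - 10*t*w^+5 - 5*t*w^+4 - 7*t*w^+3 - 2*t*w^+2 + 5*t*w - 11*t - w^+24 - w^+23 + w^+22 - w^+21 - 5*w^+20 - 3*w^+19 - 4*w^+18 - 6*w^+17 - 16*w^+15 - 20*w^+14 - w^+13 - 14*w^+12 - 17*w^+11 - 13*w^+10 - 30*w^+9 - 8*w^+8 + 2*w^+7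 - 26*w^+6 - 11*w^+5 - 4*w^+4 - 8*w^+3 - w^+2 - 3*w).
Proof. rewrite /gp /Tp /P7; ring. Qed.
Lemma idB2_1 (R : comRingType) (w : R) : -7 * Dp (Tp (w + w^+6)) - ((w - w^+6) * rp (w + w^+6))^+2 = P7 w * (- 4*w^+30 + 4*w^+29 - 8*w^+25 - 16*w^+24 + 20*w^+23 + 4*w^+22 + 4*w^+20 - 28*w^+19 - 31*w^+18 + 31*w^+17 + 20*w^+16 + 20*w^+15 + 32*w^+14 - 72*w^+13 - 54*w^+12 + 23*w^+11 + 35*w^+10 + 64*w^+9 + 10*w^+8 - 120*w^+7 - 43*w^+6 + 23*w^+5 + 7*w^+4 + 31*w^+3 - 22*w^+2 - 42*w - 21).
Proof. rewrite /Dp /Tp /rp /P7; ring. Qed.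
Lemma idB2_2 (R : comRingType) (w : R) : -7 * Dp (Tp (w^+2 + w^+5)) - ((w^+2 - w^+5) * rp (w^+2 + w^+5))^+2 = P7 w * (- 4*w^+24 + 4*w^+23 - 8*w^+21 + 8*w^+20 - 24*w^+19 + 28*w^+18 - 8*w^+17 - 20*w^+16 + 40*w^+15 - 71*w^+14 + 103*w^+13 - 68*w^+12 - 4*w^+11 + 68*w^+10 - 130*w^+9 + 140*w^+8 - 133*w^+7 + 9*w^+6 + 22*w^+5 - 85*w^+4 + 63*w^+3 - 63*w^+2 + 21*w - 21).
Proof. rewrite /Dp /Tp /rp /P7; ring. Qed.
Lemma idB2_3 (R : comRingType) (w : R) : -7 * Dp (Tp (w^+3 + w^+4)) - ((w^+3 - w^+4) * rp (w^+3 + w^+4))^+2 = P7 w * (- 4*w^+18 - 4*w^+17 + 12*w^+16 + 12*w^+15 - 36*w^+14 - 12*w^+13 + 76*w^+12 - 123*w^+10 + 31*w^+9 + 102*w^+8 - 102*w^+7 - 85*w^+6 + 63*w^+5 - 63*w^+3 + 21*w - 21).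
Proof. rewrite /Dp /Tp /rp /P7; ring. Qed.
Definition fab {R : comRingType} (x y : R) := x^+3 + 5*x^+2*y - 8*x*y^+2 + y^+3.

Lemma dirA (F : fieldType) (t s : F) : (7:F) != 0 -> (2:F) != 0 -> gp t = 0 ->
  Dp t != 0 -> s^+2 = -7 * Dp t -> exists z : F, z^+7 = 1 /\ z != 1.
Proof.
move=> h7 h2 hg hD hs.
have h343 : (343:F) != 0.
  have -> : (343:F) = 7*7*7 by ring.
  by rewrite !mulf_neq0.
have h49 : (49:F) != 0.
  have -> : (49:F) = 7*7 by ring.
  by rewrite !mulf_neq0.
pose E := -2 - 8*t - t^+2. pose e := E / 7.
have hC : Cp e = 0.
  have : 343 * Cp e = gp t * (- t^+3 - 19*t^+2 - 104*t - 127).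
    by rewrite /Cp /gp /e /E; field.
  by rewrite hg mul0r => /eqP; rewrite mulf_eq0 (negbTE h343) /= => /eqP.
have hT : Tp e = t.
  have : 49 * (Tp e - t) = gp t * (- t - 11).
    by rewrite /Tp /gp /e /E; field.
  by rewrite hg mul0r => /eqP; rewrite mulf_eq0 (negbTE h49) /= subr_eq0 => /eqP.
have hD2 : -7 * Dp t = (e^+2 - 4) * rp e ^+ 2.
  have : -7 * Dp (Tp e) - (e^+2 - 4) * rp e ^+ 2 = Cp e * (- 4*e^+3 - 20*e^+2 - 19*e + 17).
    by rewrite /Dp /Tp /rp /Cp; ring.
  by rewrite hC mul0r hT => /eqP; rewrite subr_eq0 => /eqP.
have hr : rp e != 0.
  apply/negP => /eqP hr0; move: hD2; rewrite hr0 expr0n /= mulr0 => /eqP.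
  by rewrite mulf_eq0 (negbTE hD) orbF oppr_eq0 (negbTE h7).
pose sg := s / rp e.
have hsg : sg^+2 = e^+2 - 4.
  rewrite /sg expr_div_n hs hD2 mulfK //. by rewrite expf_neq0.
pose z := (e + sg) / 2.
have hz : z^+2 - e*z + 1 = 0.
  have : 4 * (z^+2 - e*z + 1) = sg^+2 - (e^+2 - 4) by rewrite /z; field.
  rewrite hsg subrr => /eqP; rewrite mulf_eq0 => /orP[|/eqP//].
  have -> : (4:F) = 2*2 by ring.
  by rewrite mulf_eq0 (negbTE h2).
have hP : P7 z = 0.
  have : P7 z - z^+3 * Cp e = (z^+2 - e*z + 1) * (z^+4 + z^+3*e + z^+3 + z^+2*e^+2 + z^+2*e + z*e + z + 1).
    by rewrite /P7 /Cp; ring.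
  by rewrite hz hC mul0r mulr0 subr0.
exists z; split.
  apply/eqP; rewrite -subr_eq0; apply/eqP.
  have -> : z^+7 - 1 = (z - 1) * P7 z by rewrite /P7; ring.
  by rewrite hP mulr0.
apply/negP => /eqP z1.
have he : e = 2.
  have -> : e = e + (1 ^+ 2 - e * 1 + 1) by move: hz; rewrite z1 => ->; rewrite addr0.
  ring.
move: hC; rewrite he /Cp => /eqP; apply/negP.
have -> : (2:F)^+3 + 2^+2 - 2*2 - 1 = 7 by ring.
exact: h7.
Qed.

Lemma dirB (F : fieldType) (t w : F) : gp t = 0 -> P7 w = 0 ->
  exists s : F, s^+2 = -7 * Dp t.
Proof.
move=> hg hw.
have := idB1 _ t w; rewrite hg hw mul0r sub0r => /eqP; rewrite oppr_eq0 !mulf_eq0 !subr_eq0 -!orbA.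
case/or3P => /eqP ->.
- exists ((w - w^+6) * rp (w + w^+6)); apply/eqP; rewrite eq_sym -subr_eq0; apply/eqP.
  by rewrite idB2_1 hw mul0r.
- exists ((w^+2 - w^+5) * rp (w^+2 + w^+5)); apply/eqP; rewrite eq_sym -subr_eq0; apply/eqP.
  by rewrite idB2_2 hw mul0r.
- exists ((w^+3 - w^+4) * rp (w^+3 + w^+4)); apply/eqP; rewrite eq_sym -subr_eq0; apply/eqP.
  by rewrite idB2_3 hw mul0r.
Qed.

Lemma noroot (F : finFieldType) (z : F) : z^+7 = 1 -> z != 1 -> (#|F| %% 7 = 6)%N -> False.
Proof.
move=> z7 z1 hc.
have zn0 : z != 0 by apply/negP => /eqP z0; move: z7; rewrite z0 expr0n /= => /eqP; rewrite eq_sym oner_eq0.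
have := expf_card z; rewrite (divn_eq #|F| 7) hc exprD mulnC exprM z7 expr1n mul1r => z6.
have z5 : z^+5 = 1.
  apply: (mulIf zn0); rewrite mul1r -exprSr; exact: z6.
move/negP: z1; apply; apply/eqP.
have -> : z = z^+15 / z^+14 by rewrite (_ : 15 = 1 + 14)%N // exprD mulfK ?expr1 // expf_neq0.
by rewrite (_ : 15 = 5 * 3)%N // (_ : 14 = 7 * 2)%N // !exprM z5 z7 !expr1n divr1.
Qed.

Lemma prim7 (F : finFieldType) : (7 %| #|F|.-1)%N -> exists w : F, P7 w = 0.
Proof.
move=> h7.
set n := #|F|.-1.
have hn : #|F| = n.+1 by rewrite /n prednK // (ltn_trans _ (finNzRing_gt1 F)).
have npos : (0 < n)%N by rewrite /n -ltnS -hn finNzRing_gt1.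
set m := (n %/ 7)%N.
have hm : n = (m * 7)%N by rewrite /m divnK.
have mpos : (0 < m)%N by move: npos; rewrite hm muln_gt0 => /andP[].
have fermat : forall x : F, x != 0 -> x ^+ n = 1.
  move=> x xn0; apply: (mulIf xn0); rewrite mul1r -exprSr -hn; exact: expf_card.
case: (boolP [exists x : F, (x != 0) && (x ^+ m != 1)]).
  move=> /existsP[x /andP[xn0 xm]].
  exists (x ^+ m).
  have : (x ^+ m - 1) * P7 (x ^+ m) = 0.
    have -> : (x ^+ m - 1) * P7 (x ^+ m) = (x ^+ m)^+7 - 1 by rewrite /P7; ring.
    by rewrite -exprM -hm fermat // subrr.
  by move/eqP; rewrite mulf_eq0 subr_eq0 (negbTE xm) /= => /eqP.
move=> /existsPn H; exfalso.
have := @max_poly_roots F ('X^m - 1) (enum [pred x : F | x != 0]).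
rewrite -polyC1 size_XnsubC // -cardE.
have -> : #|[pred x : F | x != 0]| = n.
  by rewrite /n -(cardC1 (0:F)); apply: eq_card => x; rewrite !inE.
move=> Hm.
have : (n < m.+1)%N.
  apply: Hm; last exact: enum_uniq.
    by rewrite -size_poly_gt0 size_XnsubC.
  apply/allP => x; rewrite mem_enum inE => xn0.
  rewrite /root !hornerE subr_eq0; move: (H x); rewrite xn0 /= negbK.
  by [].
rewrite hm; lia.
Qed.

Lemma core (F : finFieldType) (al be : F) : (7:F) != 0 -> (2:F) != 0 -> fab al be = 0 ->
  be != 0 -> (#|F| %% 7 = 1 \/ #|F| %% 7 = 6)%N ->
  (-7 * (al^+2 - al*be + be^+2) != 0) /\
  ((exists s, s^+2 = -7 * (al^+2 - al*be + be^+2)) <-> (#|F| %% 7 = 1)%N).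
Proof.
move=> h7 h2 hf hb hmod.
pose t := al / be.
have hg : gp t = 0.
  have -> : gp t = fab al be / be^+3 by rewrite /gp /fab /t; field.
  by rewrite hf mul0r.
have hD : Dp t != 0.
  apply/negP => /eqP hD0.
  have : (49:F) = (3*t-8)*gp t + (-3*t^+2-10*t+57)*Dp t by rewrite /gp /Dp; ring.
  rewrite hg hD0 !mulr0 addr0 => /eqP; apply/negP.
  have -> : (49:F) = 7*7 by ring.
  by rewrite mulf_neq0.
have hX : -7 * (al^+2 - al*be + be^+2) = be^+2 * (-7 * Dp t) by rewrite /Dp /t; field.
split.
  by rewrite hX mulf_neq0 ?expf_neq0 // mulf_neq0 // oppr_eq0.
split.
  move=> [s hs].
  have hs' : (s/be)^+2 = -7 * Dp t by rewrite expr_div_n hs hX [_ * (-7 * _)]mulrC mulfK // expf_neq0.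
  have [z [z7 z1]] := dirA _ _ _ h7 h2 hg hD hs'.
  case: hmod => // h6; exfalso; exact: (noroot _ _ z7 z1 h6).
move=> h1.
have : (7 %| #|F|.-1)%N by lia.
move=> /(prim7 F) [w hw].
have [s hs] := dirB _ _ _ hg hw.
by exists (be * s); rewrite exprMn hs hX.
Qed.

Lemma mod7 (a b : int) (q : nat) : prime q -> q%:Z = fab a b ->
  (q %% 7 = 1)%N \/ (q %% 7 = 6)%N.
Proof.
move=> qpr hq.
have hc : q%:Z = (a + 4*b)^+3 - 7*b*(a + 4*b)^+2 + 49*b^+3 by rewrite hq /fab; ring.
set c := a + 4*b in hc.
have := divz_eq c 7.
have r0 : 0 <= (c %% 7)%Z by rewrite modz_ge0.
have r7 : (c %% 7)%Z < 7 by rewrite ltz_pmod.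
move: r0 r7.
set m := (c %/ 7)%Z; set r := (c %% 7)%Z.
clearbody m r => r0 r7 hcd.
rewrite hcd in hc.
have [K hK] : exists K, q%:Z = r^+3 + 7 * K.
  by exists (49 * m^+3 + 21 * m^+2*r + 3 * m*r^+2 - b*(7 * m+r)^+2 + 7*b^+3); rewrite hc; ring.
have : r = 0 \/ r = 1 \/ r = 2 \/ r = 3 \/ r = 4 \/ r = 5 \/ r = 6 by lia.
case=> [r00|hr]; last first.
  by move: hr => [|[|[|[|[|]]]]] hr; rewrite hr in hK; lia.
exfalso.
rewrite r00 in hc.
have [X hc'] : exists X, q%:Z = 49 * X.
  by exists (7 * m^+3 - 7*b * m^+2 + b^+3); rewrite hc; ring.
have d7 : (7 %| q)%N by lia.
have : (7 == q)%N by rewrite -dvdn_prime2.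
move/eqP=> q7; rewrite -q7 in hc'; lia.
Qed.

Lemma leg_sq (q : nat) (x : int) : prime q ->
  ([exists y : 'I_q, (q%:Z %| (y%:Z) ^+ 2 - x)%Z] <-> exists s : 'F_q, s^+2 = x%:~R).
Proof.
move=> qpr; have hpc := pchar_Fp qpr.
split.
  move=> /existsP [y hy]; exists (y%:R).
  by move: hy; rewrite (dvdz_pcharf hpc) rmorphB rmorphXn /= subr_eq0 => /eqP.
move=> [s hs]; apply/existsP; exists (cast_ord (Fp_cast qpr) s).
rewrite (dvdz_pcharf hpc) rmorphB rmorphXn /= subr_eq0.
have -> : ((nat_of_ord (cast_ord (Fp_cast qpr) s))%:Z%:~R : 'F_q) = s.
  exact: natr_Zp.
by rewrite hs.
Qed.

Theorem lemma6p4 (a b : int) (q : nat) :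
  prime q ->
  q%:Z = a ^+ 3 + 5 * a ^+ 2 * b - 8 * a * b ^+ 2 + b ^+ 3 ->
  [/\ (q %% 7 = 1)%N \/ (q %% 7 = 6)%N,
      (q %% 7 = 1)%N <-> legendre (- 7 * (a ^+ 2 - a * b + b ^+ 2)) q = 1
    & (q %% 7 = 6)%N <-> legendre (- 7 * (a ^+ 2 - a * b + b ^+ 2)) q = -1].
Proof.
move=> qpr hq.
have hq' : q%:Z = fab a b by exact: hq.
have h7 := mod7 _ _ _ qpr hq'.
have q7 : (7 < q)%N.
  case: (ltnP 7 q) => // hle; exfalso.
  have : (q = 1 \/ q = 6)%N by lia.
  by case=> hq1; move: qpr; rewrite hq1.
have cF : #|'F_q| = q := card_Fp qpr.
have hpc := pchar_Fp qpr.
have n0 : forall n, (0 < n)%N -> (n < q)%N -> (n%:R : 'F_q) != 0.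
  by move=> n hn hnq; rewrite -(dvdn_pcharf hpc) gtnNdvd.
have h7F : (7 : 'F_q) != 0 by apply: n0; lia.
have h2F : (2 : 'F_q) != 0 by apply: n0; lia.
pose al := (a%:~R : 'F_q); pose be := (b%:~R : 'F_q).
have hmor : forall x y : int, ((fab x y)%:~R : 'F_q) = fab x%:~R y%:~R.
  move=> x y; rewrite /fab !(rmorphD, rmorphN, rmorphM, rmorphXn, rmorph1) /=; ring.
have hf : fab al be = 0 by rewrite /al /be -hmor -hq'; exact: pchar_Fp_0.
have hb : be != 0.
  apply/negP => /eqP b0.
  have a0 : al = 0.
    move: hf; rewrite b0 /fab => /eqP.
    have -> : al ^+ 3 + 5 * al ^+ 2 * 0 - 8 * al * 0 ^+ 2 + 0 ^+ 3 = al^+3 by ring.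
    by rewrite expf_eq0 /= => /eqP.
  move: a0 b0 => /eqP; rewrite /al -(dvdz_pcharf hpc) => /dvdzP [a1 ha1].
  move=> /eqP; rewrite /be -(dvdz_pcharf hpc) => /dvdzP [b1 hb1].
  rewrite ha1 hb1 in hq'.
  have : q%:Z = q%:Z^+3 * fab a1 b1 by rewrite {1}hq' /fab; ring.
  move: (fab a1 b1) => K hK.
  have qz : (7 < q%:Z) by lia.
  move: (q%:Z) qz hK => Q qz hK.
  have h1 : Q^+2 * K = 1.
    apply: (mulfI (x := Q)); first by apply/negP => /eqP Q0; move: qz; rewrite Q0.
    by rewrite mulr1 {3}hK; ring.
  rewrite expr2 in h1.
  have Q0 : 0 <= Q by lia.
  have Q1 : 1 <= Q by lia.
  have hQ := ler_peMr Q0 Q1.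
  have hQQ : 8 <= Q * Q by lia.
  have [K1|K0] : 1 <= K \/ K <= 0 by lia.
    have QQ0 : 0 <= Q * Q by lia.
    have := ler_peMr QQ0 K1.
    by rewrite h1; lia.
  have QQ0 : 0 <= Q * Q by lia.
  have := mulr_ge0_le0 QQ0 K0.
  by rewrite h1.
have [hnz hiff] := core _ _ _ h7F h2F hf hb (eq_ind_r (fun n => (n %% 7 = 1)%N \/ (n %% 7 = 6)%N) h7 cF).
rewrite cF in hiff.
have hX : ((- 7 * (a ^+ 2 - a * b + b ^+ 2))%:~R : 'F_q) = -7 * (al^+2 - al*be + be^+2).
  by rewrite /al /be !(rmorphD, rmorphN, rmorphM, rmorphXn, rmorph1) /=; ring.
have hx : (q%:Z %| (- 7 * (a ^+ 2 - a * b + b ^+ 2)))%Z = false.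
  by rewrite (dvdz_pcharf hpc) hX (negbTE hnz).
have hL := leg_sq _ (- 7 * (a ^+ 2 - a * b + b ^+ 2)) qpr.
rewrite hX in hL.
rewrite /legendre hx.
case: ifP => hP.
  have h1 : (q %% 7 = 1)%N by apply/hiff/hL; rewrite hP.
  by split => //; split => // ; lia.
have h6 : (q %% 7 = 6)%N.
  case: h7 => // h1; exfalso.
  by move: hP; have [s hs] := proj2 hiff h1; rewrite (_ : [exists _, _] = true) //; apply/idP; apply/hL; exists s.
by split => //; split => //; lia.
Qed.
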